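(* Let $d\ge 1$ and $h\ge 1$ be integers, let $T$ be the complete $d$-ary tree of height $h$, and let $v$ be a leaf of $T$. For every integer $0\le l\le h$, the hitting time from the ancestor of $v$ at distance $l$ from $v$ to $v$ is $g_{h,h}(d)-g_{h,h-l}(d)$.
   Context: The complete $d$-ary tree of height $h$ is the rooted tree in which every vertex at depth less than $h$ has exactly $d$ children and every vertex at depth $h$ is a leaf; the ancestors of $v$ are the vertices on the path from $v$ to the root (including $v$). For a positive integer $k$ and nonnegative integer $m$ define $g_{k,0}(d)=0$ and, for $m\ge 1$, $g_{k,m}(d)=\left(\sum_{i=0}^{m-1}(2m-2i)d^{k-i}\right)-m$. A simple random walk moves at each step to a uniformly random neighbor; the hitting time from $x$ to $y$ is the expected number of steps for a simple random walk started at $x$ to first reach $y$. *)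

(* Defs.v *)
From HB Require Import structures.
From mathcomp Require Import all_boot all_order all_algebra.
From mathcomp Require Import all_classical all_reals all_analysis.
Set Implicit Arguments. Unset Strict Implicit. Unset Printing Implicit Defensive.
Import Order.TTheory GRing.Theory Num.Theory.
Import numFieldNormedType.Exports.
Local Open Scope classical_set_scope.
Local Open Scope ring_scope.

(* srw_surv e y n x = probability that the simple random walk started at x
   has not reached y during steps 0..n, i.e. P_x(tau_y > n), where
   tau_y is the first time the walk is at y. *)
Fixpoint srw_surv {R : realType} {T : finType} (e : rel T) (y : T) (n : nat)
  (x : T) : R :=
  match n with
  | 0 => (x != y)%:R
  | n'.+1 => if x == y then 0
             else (\sum_(z | e x z) srw_surv e y n' z) / (#|[pred z | e x z]|)%:R
  end.

(* The expected hitting time from x to y is E_x[tau_y] = sum_{n>=0} P_x(tau_y > n).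
   [hitting_time_is e x y t] says this series converges and its sum is t. *)
Definition hitting_time_is {R : realType} {T : finType} (e : rel T) (x y : T)
  (t : R) : Prop :=
  series (fun n => srw_surv e y n x) @ \oo --> t.

(* A vertex is the word (sequence of child indices in 'I_d) describing the
   path from the root; its length k <= h is its depth. The root is [::]. *)
Definition tvert (d h : nat) : finType := {k : 'I_h.+1 & k.-tuple 'I_d}.
Definition vword {d h : nat} (x : tvert d h) : seq 'I_d := tagged x.

Definition is_child {d : nat} (s t : seq 'I_d) : bool :=
  (size t == (size s).+1) && (s == take (size s) t).

Definition tree_adj (d h : nat) : rel (tvert d h) :=
  fun x y => is_child (vword x) (vword y) || is_child (vword y) (vword x).

Definition g {R : realType} (k m d : nat) : R :=
  (\sum_(i < m) ((2 * m - 2 * i)%N)%:R * (d%:R) ^+ (k - i)) - m%:R.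
Arguments tree_adj d h : clear implicits.
Arguments g {R} k m d.

(* Main.v *)
Require Import Defs.
From HB Require Import structures.
From mathcomp Require Import all_boot all_order all_algebra.
From mathcomp Require Import all_classical all_reals all_analysis.
From mathcomp Require Import zify ring lra.
Import Order.TTheory GRing.Theory Num.Theory.
Import numFieldNormedType.Exports.
Local Open Scope classical_set_scope.
Local Open Scope ring_scope.
Set Implicit Arguments. Unset Strict Implicit. Unset Printing Implicit Defensive.

Lemma surv_ge0 (R : realType) (T : finType) (e : rel T) (y : T) n x :
  0 <= srw_surv (R:=R) e y n x.
Proof.
elim: n x => [|n IH] x /=; first by case: (x != y).
case: (x == y) => //; apply: divr_ge0; last exact: ler0n.
by apply: sumr_ge0 => z _; apply: IH.
Qed.

Lemma surv_y (R : realType) (T : finType) (e : rel T) (y : T) n :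
  srw_surv (R:=R) e y n y = 0.
Proof. by case: n => [|n] /=; rewrite eqxx. Qed.

Lemma series_rec (R : realType) (T : finType) (e : rel T) (y : T) n x :
  series (fun k => srw_surv (R:=R) e y k x) n.+1 =
  if x == y then 0 else
  1 + (\sum_(z | e x z) series (fun k => srw_surv (R:=R) e y k z) n)
      / (#|[pred z | e x z]|)%:R.
Proof.
rewrite /series /= big_nat_recl //=.
case: (eqVneq x y) => [exy|xy]; first by rewrite /= big1_eq addr0.
rewrite /=; congr (_ + _).
rewrite -mulr_suml; congr (_ * _).
by rewrite exchange_big.
Qed.

Lemma max_exists (R : realType) (T : finType) (y : T) (g : T -> R) :
  exists x0, forall x, g x <= g x0.
Proof.
exists [arg max_(i > y) g i]%O.
case: (arg_maxP g (erefl true : (fun _ => true) y)) => i _ H x.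
exact: H.
Qed.

Lemma hit_generic (R : realType) (T : finType) (e : rel T) (y : T) (f : T -> R)
   (dist : T -> nat) :
  f y = 0 -> (forall x, 0 <= f x) ->
  (forall x, x != y -> f x = 1 + (\sum_(z | e x z) f z) / (#|[pred z | e x z]|)%:R) ->
  (forall x, x != y -> exists2 z, e x z & (dist z < dist x)%N) ->
  forall x, hitting_time_is e x y (f x).
Proof.
move=> fy f0 fh hd.
pose P (n : nat) (x : T) : R := series (fun k => srw_surv (R:=R) e y k x) n.
have P0 x : P 0%N x = 0 by rewrite /P /series /= big_nil.
have Pf n x : P n x <= f x.
  elim: n x => [|n IH] x; first by rewrite P0.
  rewrite /P series_rec; case: eqP => [->|/eqP xy]; first by rewrite fy.
  rewrite (fh x xy) lerD2l ler_wpM2r ?invr_ge0 ?ler0n //.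
  by apply: ler_sum => z _; apply: IH.
have Pnd x : nondecreasing_seq (P ^~ x).
  apply/nondecreasing_seqP => n; rewrite /P /series /= big_nat_recr //=.
  by rewrite lerDl surv_ge0.
have Pc x : cvgn (P ^~ x).
  apply: nondecreasing_is_cvgn => //; exists (f x) => _ [n _ <-]; exact: Pf.
pose L x := limn (P ^~ x).
have PL x : P ^~ x @ \oo --> L x by apply: Pc.
have Ly : L y = 0.
  rewrite /L; have -> : P ^~ y = fun _ => 0.
    by apply/funext => -[|n]; rewrite ?P0 // /P series_rec eqxx.
  exact: lim_cst.
have Lf x : L x <= f x.
  by apply: limr_le => //; near=> n; apply: Pf.
have Lh x : x != y -> L x = 1 + (\sum_(z | e x z) L z) / (#|[pred z | e x z]|)%:R.
  move=> xy.
  have h1 : (fun n => P n.+1 x) @ \oo --> L x by rewrite (cvg_shiftS (P ^~ x)).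
  have h2 : (fun n => P n.+1 x) @ \oo -->
      1 + (\sum_(z | e x z) L z) / (#|[pred z | e x z]|)%:R.
    under eq_cvg do rewrite /P series_rec (negbTE xy).
    apply: cvgD; first exact: cvg_cst.
    apply: cvgMr_tmp.
    apply: (cvg_big (op := +%R) (x0 := 0) (P := fun z => e x z)).
      exact: add_continuous.
    by move=> z _; apply: PL.
  exact: (cvg_unique _ h1 h2).
pose gg x := f x - L x.
have gg0 x : 0 <= gg x by rewrite subr_ge0.
have ggy : gg y = 0 by rewrite /gg fy Ly subr0.
have ggh x : x != y -> gg x = (\sum_(z | e x z) gg z) / (#|[pred z | e x z]|)%:R.
  move=> xy; rewrite /gg (fh x xy) (Lh x xy) opprD addrACA subrr add0r.
  by rewrite -mulrBl -sumrB.
have [x0 Hx0] := @max_exists R T y gg.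
have key : forall n x, (dist x <= n)%N -> gg x = gg x0 -> gg x0 = 0.
  elim=> [|n IH] x dx gx.
  - case: (eqVneq x y) => [xy|xy]; first by rewrite -gx xy.
    by have [z _] := hd x xy; rewrite ltnNge (leq_trans dx) ?leq0n.
  - case: (eqVneq x y) => [xy|xy]; first by rewrite -gx xy.
    have [z ez dz] := hd x xy.
    apply: (IH z); first by rewrite -ltnS (leq_trans dz).
    set c := #|[pred z | e x z]|.
    have cpos : (0 < c)%N by apply/card_gt0P; exists z.
    have hs : \sum_(w | e x w) (gg x0 - gg w) = 0.
      rewrite sumrB.
      have -> : \sum_(w | e x w) gg x0 = gg x0 * c%:R.
        by rewrite (sumr_const [pred w | e x w]) mulr_natr.
      apply/eqP; rewrite subr_eq0; apply/eqP.
      rewrite -gx (ggh x xy) mulfVK // pnatr_eq0 -lt0n //.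
    have := psumr_eq0P _ hs ez.
    move=> /(_ _)/eqP; rewrite subr_eq0 => /(_ _)/eqP.
    by move=> H; apply/esym/H => w _; rewrite subr_ge0 Hx0.
move=> x.
have gx : gg x = 0.
  apply/le_anti; rewrite gg0 andbT (le_trans (Hx0 x)) //.
  by rewrite (key (dist x0) x0).
have : L x = f x by apply/eqP; rewrite -subr_eq0 -oppr_eq0 opprB; apply/eqP.
by move=> <-; apply: PL.
Unshelve. all: by end_near.
Qed.

Definition Sd (R : realType) (d n : nat) : R := \sum_(i < n.+1) (d%:R)^+i.
Definition Uf (R : realType) (d h j : nat) : R := 2 * Sd R d (h - j) - 1.
Definition Hf (R : realType) (d h a : nat) : R := g h h d - g h a d.
Definition Ef (R : realType) (d h m : nat) : R := \sum_(i < m) (d%:R : R)^+(h - i).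

Lemma gS (R : realType) (d h m : nat) :
  g h m.+1 d - g h m d = 2 * Ef R d h m.+1 - 1 :> R.
Proof.
rewrite /g /Ef big_ord_recr /= [in RHS]big_ord_recr /=.
have -> : \sum_(i < m) ((2 * m.+1 - 2 * i)%N%:R * (d%:R : R) ^+ (h - i)) =
   \sum_(i < m) ((2 * m - 2 * i)%N%:R * (d%:R : R) ^+ (h - i)) +
   2 * \sum_(i < m) (d%:R : R) ^+ (h - i).
  rewrite mulr_sumr -big_split; apply: eq_bigr => i _ /=.
  have -> : (2 * m.+1 - 2 * i = (2 * m - 2 * i) + 2)%N by have := ltn_ord i; lia.
  by rewrite natrD mulrDl.
have -> : (2 * m.+1 - 2 * m = 2)%N by lia.
rewrite -natr1; ring.
Qed.

Lemma Ef_ge1 (R : realType) (d h m : nat) : (1 <= d)%N -> (0 < m)%N -> 1 <= Ef R d h m.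
Proof.
move=> d1; case: m => // m _; rewrite /Ef big_ord_recl /=.
have h1 : 1 <= (d%:R : R) ^+ (h - 0) by apply: exprn_ege1; rewrite ler1n.
have h2 : 0 <= \sum_(i < m) (d%:R : R) ^+ (h - bump 0 i).
  by apply: sumr_ge0 => i _; rewrite exprn_ge0.
lra.
Qed.

Lemma Hf_ge0 (R : realType) (d h a : nat) : (1 <= d)%N -> (a <= h)%N -> 0 <= Hf R d h a.
Proof.
move=> d1; have [n hn] : exists n, (h - a = n)%N by eexists.
elim: n a hn => [|n IH] a ha ah.
  have -> : a = h by lia.
  by rewrite /Hf subrr.
have -> : Hf R d h a = Hf R d h a.+1 + (g h a.+1 d - g h a d).
  by rewrite /Hf; ring.
apply: addr_ge0; first by apply: IH; lia.
by rewrite gS; have := @Ef_ge1 R d h a.+1 d1 isT; lra.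
Qed.

Lemma Sd_ge1 (R : realType) (d n : nat) : 1 <= Sd R d n.
Proof.
rewrite /Sd big_ord_recl /= expr0.
have h2 : 0 <= \sum_(i < n) (d%:R : R) ^+ (bump 0 i).
  by apply: sumr_ge0 => i _; rewrite exprn_ge0.
lra.
Qed.

Lemma SdS (R : realType) (d n : nat) : Sd R d n.+1 = 1 + d%:R * Sd R d n.
Proof.
rewrite /Sd big_ord_recl expr0 mulr_sumr; congr (_ + _).
by apply: eq_bigr => i _; rewrite exprS.
Qed.

Lemma SdSr (R : realType) (d n : nat) : Sd R d n.+1 = Sd R d n + d%:R ^+ n.+1.
Proof. by rewrite /Sd big_ord_recr. Qed.

Lemma EfS (R : realType) (d h m : nat) : Ef R d h m.+1 = Ef R d h m + d%:R ^+ (h - m).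
Proof. by rewrite /Ef big_ord_recr. Qed.

Lemma idA (R : realType) (d h k : nat) : (k < h)%N ->
  Uf R d h k = 1 + d%:R + d%:R * Uf R d h k.+1.
Proof.
move=> kh; rewrite /Uf.
have -> : (h - k = (h - k.+1).+1)%N by lia.
rewrite SdS; ring.
Qed.

Lemma idAh (R : realType) (d h : nat) : Uf R d h h = 1.
Proof. by rewrite /Uf subnn /Sd big_ord1 expr0; ring. Qed.

Lemma idB (R : realType) (d h k : nat) : (0 < k)%N -> (k < h)%N ->
  (g h k d - g h k.-1 d) - (g h k.+1 d - g h k d) + (d%:R - 1) * Uf R d h k.+1
    + d%:R + 1 = 0.
Proof.
case: k => // k _ kh; rewrite /= !gS !EfS /Uf.
have -> : (h - k.+1 = (h - k.+2).+1)%N by lia.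
have eA : (d%:R : R) ^+ (h - k.+2).+1 = 1 + d%:R * Sd R d (h - k.+2) - Sd R d (h - k.+2).
  by rewrite -SdS SdSr; ring.
rewrite eA; ring.
Qed.

Lemma idB0 (R : realType) (d h : nat) : (0 < h)%N ->
  - (g h 1 d - g h 0 d) + (d%:R - 1) * Uf R d h 1 + d%:R = 0.
Proof.
move=> h0; rewrite gS EfS /Uf /Ef big_ord0 subn0.
have -> : (h = (h - 1).+1)%N by lia.
rewrite subSS subn0.
have eA : (d%:R : R) ^+ (h - 1).+1 = 1 + d%:R * Sd R d (h - 1) - Sd R d (h - 1).
  by rewrite -SdS SdSr; ring.
rewrite eA; ring.
Qed.

Definition mkv (d h : nat) (s : seq 'I_d) (H : (size s < h.+1)%N) : tvert d h :=
  existT (fun k : 'I_h.+1 => k.-tuple 'I_d) (Ordinal H) (in_tuple s).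

Lemma vword_mkv (d h : nat) (s : seq 'I_d) (H : (size s < h.+1)%N) : vword (mkv H) = s.
Proof. by []. Qed.

Lemma size_vword (d h : nat) (x : tvert d h) : (size (vword x) <= h)%N.
Proof. by case: x => k t; rewrite /vword /= size_tuple -ltnS ltn_ord. Qed.

Lemma vword_inj (d h : nat) : injective (@vword d h).
Proof.
move=> [k t] [k' t']; rewrite /vword /= => E.
have kk : k = k'.
  by apply: val_inj; rewrite /= -(size_tuple t) -(size_tuple t') E.
subst k'; congr existT; exact: val_inj.
Qed.

Lemma is_childP (d : nat) (s t : seq 'I_d) (i0 : 'I_d) :
  is_child s t -> t = rcons s (last i0 t).
Proof.
rewrite /is_child => /andP[/eqP st /eqP sE].
case/lastP: t st sE => [//|t j]; rewrite size_rcons => -[st].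
by rewrite -st -cats1 take_size_cat // cats1 => ->; rewrite last_rcons.
Qed.

Lemma is_child_rcons (d : nat) (s : seq 'I_d) i : is_child s (rcons s i).
Proof. by rewrite /is_child size_rcons eqxx /= -cats1 take_size_cat. Qed.

Lemma is_child_parent (d : nat) (s t : seq 'I_d) :
  is_child t s = (s != [::]) && (t == take (size s).-1 s).
Proof.
rewrite /is_child; case: s => [|a s] /=; first by case: t.
apply/andP/eqP => [[/eqP [st] /eqP ->]|->]; first by rewrite st.
by rewrite size_take /= ltnSn eqxx.
Qed.

Lemma sum_parent (R : realType) (d h : nat) (x : tvert d h) (G : seq 'I_d -> R) :
  \sum_(z : tvert d h | is_child (vword z) (vword x)) G (vword z) =
  if vword x == [::] then 0 else G (take (size (vword x)).-1 (vword x)).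
Proof.
case: eqP => [->|/eqP ne].
  by rewrite big_pred0 // => z; rewrite is_child_parent.
have Hs : (size (take (size (vword x)).-1 (vword x)) < h.+1)%N.
  by have := size_vword x; rewrite size_take; case: ifP => _; lia.
rewrite (big_pred1 (mkv Hs)) //.
move=> z; rewrite is_child_parent ne /=.
apply/eqP/eqP => [E|->]; last by [].
by apply: vword_inj; rewrite vword_mkv.
Qed.

Lemma sum_children (R : realType) (d h : nat) (x : tvert d h) (i0 : 'I_d) (G : seq 'I_d -> R) :
  \sum_(z : tvert d h | is_child (vword x) (vword z)) G (vword z) =
  if (size (vword x) < h)%N then \sum_(i < d) G (rcons (vword x) i) else 0.
Proof.
case: ifP => kh; last first.
  rewrite big_pred0 // => z; apply/negbTE/negP => /andP[/eqP E _].
  by move: (size_vword z) kh; rewrite E; lia.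
have Hs i : (size (rcons (vword x) i) < h.+1)%N by rewrite size_rcons ltnS.
rewrite (reindex_onto (fun i => mkv (Hs i)) (fun z => last i0 (vword z))).
  apply: eq_big => [i|i _]; last by rewrite vword_mkv.
  by rewrite vword_mkv is_child_rcons last_rcons eqxx.
move=> z /(is_childP i0) E; apply: vword_inj; rewrite vword_mkv; exact/esym.
Qed.

Fixpoint cpl {T : eqType} (s t : seq T) : nat :=
  match s, t with
  | x :: s', y :: t' => if x == y then (cpl s' t').+1 else 0%N
  | _, _ => 0%N
  end.

Lemma cpl_le (T : eqType) (s t : seq T) : (cpl s t <= size s)%N.
Proof.
elim: s t => [|a s IH] [|b t] //=; case: (a == b) => //; exact: IH.
Qed.

Lemma cpl_take (T : eqType) m (s t : seq T) : cpl (take m s) t = minn m (cpl s t).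
Proof.
elim: s m t => [|a s IH] [|m] [|b t] //=; rewrite ?minn0 ?min0n //.
by case: (a == b); rewrite ?minn0 // IH minnSS.
Qed.

Lemma cpl_self (T : eqType) (t : seq T) : cpl t t = size t.
Proof. by elim: t => //= a t ->; rewrite eqxx. Qed.

Lemma cpl_prefix (T : eqType) (s t : seq T) : cpl s t = size s -> s = take (size s) t.
Proof.
elim: s t => [|a s IH] [|b t] /=; [by []|by []|by []|].
case: (eqVneq a b) => [->|_] //.
by case=> /IH e; rewrite {1}e.
Qed.

Lemma cpl_rcons (T : eqType) (s t : seq T) i :
  cpl (rcons s i) t =
  if cpl s t == size s then
    (if (size s < size t)%N && (nth i t (size s) == i) then (size s).+1 else size s)
  else cpl s t.
Proof.
elim: s t => [|a s IH] [|b t] //=; first by rewrite eq_sym; case: (i == b).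
case: (a == b) => //; rewrite IH eqSS ltnS.
by case: ifP => _ //; case: ifP.
Qed.

Definition Fn (R : realType) (d h a k : nat) : R :=
  \sum_(a <= j < k) Uf R d h j.+1 + Hf R d h a.

Lemma FnS (R : realType) (d h a k : nat) : (a <= k)%N ->
  Fn R d h a k.+1 = Fn R d h a k + Uf R d h k.+1.
Proof. by move=> ak; rewrite /Fn big_nat_recr //=; ring. Qed.

Lemma Fnn (R : realType) (d h a : nat) : Fn R d h a a = Hf R d h a.
Proof. by rewrite /Fn big_geq // add0r. Qed.

Definition fv (R : realType) (d h : nat) (w : seq 'I_d) (x : tvert d h) : R :=
  Fn R d h (cpl (vword x) w) (size (vword x)).

Lemma child_excl (d : nat) (s t : seq 'I_d) : is_child s t -> is_child t s = false.
Proof.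
rewrite /is_child => /andP[/eqP e _]; apply/negbTE/negP => /andP[/eqP e' _]; lia.
Qed.

Lemma sum_split (R : realType) (d h : nat) (x : tvert d h) (i0 : 'I_d) (G : seq 'I_d -> R) :
  \sum_(z | tree_adj d h x z) G (vword z) =
  (if vword x == [::] then 0 else G (take (size (vword x)).-1 (vword x))) +
  (if (size (vword x) < h)%N then \sum_(i < d) G (rcons (vword x) i) else 0).
Proof.
rewrite -sum_parent -(sum_children _ i0) addrC.
rewrite (bigID (fun z => is_child (vword x) (vword z))) /=; congr (_ + _).
  apply: eq_bigl => z; rewrite /tree_adj.
  set A := is_child (vword x) _; set B := is_child _ _.
  by case: A; case: B.
apply: eq_bigl => z; rewrite /tree_adj.
set A := is_child (vword x) _; set B := is_child _ _.
case E: B; last by case: A.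
by rewrite /A (child_excl E).
Qed.

Lemma deg_eq (R : realType) (d h : nat) (x : tvert d h) (i0 : 'I_d) :
  (#|[pred z | tree_adj d h x z]|%:R : R) =
  (if vword x == [::] then 0 else 1) + (if (size (vword x) < h)%N then d%:R else 0).
Proof.
have := sum_split x i0 (fun _ => (1 : R)).
rewrite (sumr_const [pred z | tree_adj d h x z]) sumr_const card_ord => ->.
by [].
Qed.

Lemma tree_harm (R : realType) (d h : nat) (w : seq 'I_d) (x : tvert d h) :
  (1 <= d)%N -> size w = h -> vword x != w ->
  fv R w x = 1 + (\sum_(z | tree_adj d h x z) fv R w z) /
                 (#|[pred z | tree_adj d h x z]|%:R).
Proof.
move=> d1 hw ne; pose i0 : 'I_d := Ordinal d1.
rewrite (deg_eq R x i0) /fv (sum_split x i0 (fun s => Fn R d h (cpl s w) (size s))).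
set t := vword x in ne *.
have kh : (size t <= h)%N by apply: size_vword.
have ak : (cpl t w <= size t)%N by apply: cpl_le.
set k := size t in kh ak *; set a := cpl t w in ak *.
have dd : (d%:R : R) = (d.-1)%:R + 1 by rewrite natr1 prednK.
case: (ltnP a k) => [ak'|ka].
- (* off path *)
  have tn : (t == [::]) = false by apply/negbTE; apply/eqP => t0; move: ak'; rewrite /k t0.
  rewrite tn.
  have -> : cpl (take k.-1 t) w = a by rewrite cpl_take; apply/minn_idPr; lia.
  have -> : size (take k.-1 t) = k.-1 by rewrite size_take; case: ifP => //; lia.
  have ch i : cpl (rcons t i) w = a.
    by rewrite cpl_rcons -/a -/k; case: eqP => //; lia.
  under eq_bigr => i _ do rewrite ch size_rcons.
  rewrite sumr_const card_ord.
  have Ek : Fn R d h a k = Fn R d h a k.-1 + Uf R d h k.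
    by rewrite -{1}(prednK (leq_ltn_trans (leq0n _) ak')) FnS ?prednK //; lia.
  have Ek1 : Fn R d h a k.+1 = Fn R d h a k + Uf R d h k.+1 by apply: FnS; lia.
  rewrite Ek1 Ek.
  case: (ltnP k h) => [kh'|hk].
  + have hc : (1 + d%:R : R) != 0 by rewrite nat1r pnatr_eq0.
    suff -> : Fn R d h a k.-1 + (Fn R d h a k.-1 + Uf R d h k + Uf R d h k.+1) *+ d =
              (Fn R d h a k.-1 + Uf R d h k - 1) * (1 + d%:R) by rewrite mulfK //; ring.
    rewrite (idA _ _ kh'); ring.
  + have -> : k = h by lia.
    by rewrite idAh !addr0 divr1 addrC.
- (* on path *)
  have ak2 : a = k by lia.
  have tp : t = take k w by exact: (cpl_prefix ak2).
  have kh' : (k < h)%N.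
    rewrite ltn_neqAle kh andbT; apply/eqP => kh2; move: ne; rewrite tp kh2 -hw take_size eqxx //.
  rewrite kh'.
  set j0 := nth i0 w k.
  have ch i : cpl (rcons t i) w = if j0 == i then k.+1 else k.
    rewrite cpl_rcons -/a -/k ak2 eqxx hw kh' /= /j0.
    by rewrite (set_nth_default i0) // hw.
  under eq_bigr => i _ do rewrite ch size_rcons.
  rewrite (bigD1 j0) //= eqxx.
  under eq_bigr => i /negbTE ij do rewrite eq_sym ij.
  rewrite (sumr_const (predC1 j0)) cardC1 card_ord Fnn FnS // Fnn ak2 Fnn.
  rewrite -/k; case: (posnP k) => [k0|k0].
  + have -> : t == [::] by rewrite -size_eq0 -/k k0.
    rewrite k0 add0r.
    have E := @idB0 R d h (leq_ltn_trans (leq0n _) kh').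
    have hc : (d%:R : R) != 0 by rewrite pnatr_eq0 -lt0n.
    suff -> : Hf R d h 1 + (Hf R d h 0 + Uf R d h 1) *+ d.-1 =
              (Hf R d h 0 - 1) * d%:R by rewrite ?add0r mulfK //; ring.
    apply/eqP; rewrite -subr_eq0; apply/eqP; rewrite -mulr_natr.
    apply: eq_trans E; rewrite /Hf dd; ring.
  + have -> : (t == [::]) = false by apply/negbTE; rewrite -size_eq0 -/k -lt0n.
    have -> : cpl (take k.-1 t) w = k.-1 by rewrite cpl_take -/a ak2; apply/minn_idPl; lia.
    have -> : size (take k.-1 t) = k.-1 by rewrite size_take; case: ifP => //; lia.
    rewrite Fnn.
    have E := @idB R d h k k0 kh'.
    have hc : (1 + d%:R : R) != 0 by rewrite nat1r pnatr_eq0.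
    suff -> : Hf R d h k.-1 + (Hf R d h k.+1 + (Hf R d h k + Uf R d h k.+1) *+ d.-1) =
              (Hf R d h k - 1) * (1 + d%:R) by rewrite mulfK //; ring.
    apply/eqP; rewrite -subr_eq0; apply/eqP; rewrite -mulr_natr.
    apply: eq_trans E; rewrite /Hf dd; ring.
Qed.

Definition tdist (d h : nat) (w : seq 'I_d) (x : tvert d h) : nat :=
  (size (vword x) - cpl (vword x) w) + (h - cpl (vword x) w).

Lemma tree_dist (d h : nat) (w : seq 'I_d) (x : tvert d h) :
  (1 <= d)%N -> size w = h -> vword x != w ->
  exists2 z, tree_adj d h x z & (tdist w z < tdist w x)%N.
Proof.
move=> d1 hw ne; pose i0 : 'I_d := Ordinal d1.
rewrite /tdist.
set t := vword x in ne *.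
have kh : (size t <= h)%N by apply: size_vword.
have ak : (cpl t w <= size t)%N by apply: cpl_le.
set k := size t in kh ak *; set a := cpl t w in ak *.
case: (ltnP a k) => [ak'|ka].
- have Hs : (size (take k.-1 t) < h.+1)%N by rewrite size_take; case: ifP; lia.
  exists (mkv Hs).
    rewrite /tree_adj vword_mkv; apply/orP; right; rewrite is_child_parent; apply/andP; split=> //.
    by apply/eqP => t0; move: ak'; rewrite /k /a /t t0.
  rewrite vword_mkv cpl_take -/a size_take.
  have -> : minn k.-1 a = a by apply/minn_idPr; lia.
  case: ifP; lia.
- have ak2 : a = k by lia.
  have tp : t = take k w by exact: (cpl_prefix ak2).
  have kh' : (k < h)%N.
    rewrite ltn_neqAle kh andbT; apply/eqP => kh2; move: ne; rewrite tp kh2 -hw take_size eqxx //.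
  have Hs : (size (rcons t (nth i0 w k)) < h.+1)%N by rewrite size_rcons.
  exists (mkv Hs).
    by rewrite /tree_adj vword_mkv is_child_rcons.
  rewrite vword_mkv cpl_rcons -/a -/k ak2 eqxx hw kh' size_rcons /=.
  rewrite (set_nth_default i0 (nth i0 w k)) ?hw // eqxx; lia.
Qed.

Lemma fv_ge0 (R : realType) (d h : nat) (w : seq 'I_d) (x : tvert d h) :
  (1 <= d)%N -> 0 <= fv R w x.
Proof.
move=> d1; rewrite /fv /Fn; apply: addr_ge0.
  apply: sumr_ge0 => j _; rewrite /Uf; have := Sd_ge1 R d (h - j.+1); lra.
apply: Hf_ge0 => //; exact: leq_trans (cpl_le _ _) (size_vword x).
Qed.

Unset Implicit Arguments.
Theorem mainTheorem8 (R : realType) (d h : nat) (v u : tvert d h) (l : nat) :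
  (1 <= d)%N -> (1 <= h)%N ->
  size (vword v) = h ->
  (l <= h)%N ->
  vword u = take (h - l) (vword v) ->
  hitting_time_is (tree_adj d h) u v (g h h d - g h (h - l) d : R).
Proof.
move=> d1 h1 hv lh hu.
set w := vword v.
have neq z : z != v -> vword z != w.
  by apply: contra => /eqP e; apply/eqP; apply: vword_inj.
have -> : (g h h d - g h (h - l) d : R) = fv R w u.
  rewrite /fv hu cpl_take cpl_self size_take hv.
  have -> : minn (h - l) h = (h - l)%N by apply/minn_idPl; lia.
  have -> : (if (h - l < h)%N then (h - l)%N else h) = (h - l)%N by case: ifP; lia.
  by rewrite Fnn.
apply: (hit_generic (dist := tdist w)).
- by rewrite /fv cpl_self hv Fnn /Hf subrr.
- by move=> x; apply: fv_ge0.
- by move=> x /neq nx; apply: tree_harm.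
- by move=> x /neq nx; apply: tree_dist.
Qed.
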